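(* Let $(a_i)_{i=1}^n$ be a strictly V-shaped finite real sequence ($n\ge2$) and let $\alpha<\beta$ be real numbers. Then there exists a subdivision $\alpha=t_1<t_2<\dots<t_n=\beta$ of $[\alpha,\beta]$ such that $(t_i)_{i=1}^n\in T_a$.
   Context: For a real sequence $(x_i)$, $\Delta x_i=x_{i+1}-x_i$. ''Increasing'' means strictly increasing. For a real sequence $a=(a_i)_{i=1}^n$, $T_a$ denotes the set of increasing real sequences $(t_i)_{i=1}^n$ such that $(\Delta a_i/\Delta t_i)_{i=1}^{n-1}$ is non-decreasing. A sequence is strictly V-shaped if there are indices $1\le m\le M\le n$ such that $a_1>a_2>\dots>a_m=a_{m+1}=\dots=a_M<a_{M+1}<\dots<a_n$ (i.e. it is strictly monotonic, or strictly decreasing then constant, or constant then strictly increasing, or strictly decreasing then strictly increasing, or strictly decreasing then constant then strictly increasing). *)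

(* Defs.v *)
(* concrete reals R. Finite sequences (x_i)_{i=1}^n are
   modelled as functions nat -> R of which only indices 1..n matter. *)
From Stdlib Require Import Reals.
Open Scope R_scope.

Definition Delta (x : nat -> R) (i : nat) : R := x (S i) - x i.

Definition increasing_seq (n : nat) (t : nat -> R) : Prop :=
  forall i : nat, (1 <= i)%nat -> (i < n)%nat -> t i < t (S i).

Definition in_T (n : nat) (a t : nat -> R) : Prop :=
  increasing_seq n t /\
  forall i : nat, (1 <= i)%nat -> (S i < n)%nat ->
    Delta a i / Delta t i <= Delta a (S i) / Delta t (S i).

Definition strictly_V_shaped (n : nat) (a : nat -> R) : Prop :=
  exists m M : nat, (1 <= m)%nat /\ (m <= M)%nat /\ (M <= n)%nat /\
    (forall i, (1 <= i)%nat -> (i < m)%nat -> a i > a (S i)) /\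
    (forall i, (m <= i)%nat -> (i < M)%nat -> a i = a (S i)) /\
    (forall i, (M <= i)%nat -> (i < n)%nat -> a i < a (S i)).

(* Main.v *)
Require Import Defs.
From Stdlib Require Import Reals Lra Lia.
Open Scope R_scope.

Definition dd (a : nat -> R) (i : nat) : R :=
  if Req_EM_T (Defs.Delta a i) 0 then 1 else Rabs (Defs.Delta a i).

Lemma dd_pos a i : 0 < dd a i.
Proof. unfold dd; destruct Req_EM_T; [lra|]. apply Rabs_pos_lt; auto. Qed.

Definition sg a i := Defs.Delta a i / dd a i.

Lemma sg_neg a i : Defs.Delta a i < 0 -> sg a i = -1.
Proof. intros H; unfold sg, dd; destruct Req_EM_T; [lra|].
  rewrite Rabs_left by lra. field. lra. Qed.
Lemma sg_pos a i : Defs.Delta a i > 0 -> sg a i = 1.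
Proof. intros H; unfold sg, dd; destruct Req_EM_T; [lra|].
  rewrite Rabs_right by lra. field. lra. Qed.
Lemma sg_zero a i : Defs.Delta a i = 0 -> sg a i = 0.
Proof. intros H; unfold sg; rewrite H; unfold Rdiv; ring. Qed.
Lemma sg_ge a i : -1 <= sg a i.
Proof. destruct (Rtotal_order (Defs.Delta a i) 0) as [h|[h|h]].
  rewrite sg_neg; lra. rewrite sg_zero; lra. rewrite sg_pos; lra. Qed.

Fixpoint P (a : nat -> R) (k : nat) : R :=
  match k with O => 0 | S k' => P a k' + dd a k' end.

Lemma P_gt a j : (2 <= j)%nat -> P a j > P a 1.
Proof.
  induction j; intros H; [lia|].
  destruct (Nat.eq_dec j 1) as [->|Hj].
  - simpl. pose proof (dd_pos a 1). lra.
  - assert (Hj2 : (2 <= j)%nat) by lia. specialize (IHj Hj2).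
    change (P a (S j)) with (P a j + dd a j). pose proof (dd_pos a j). lra.
Qed.

Theorem theorem2p3 (n : nat) (a : nat -> R) (alpha beta : R) :
  (2 <= n)%nat -> strictly_V_shaped n a -> alpha < beta ->
  exists t : nat -> R, t 1%nat = alpha /\ t n = beta /\ in_T n a t.
Proof.
  intros Hn [m [M [H1 [H2 [H3 [Hd [Hc Hi]]]]]]] Hab.
  pose proof (P_gt a n Hn) as HP.
  set (c := (beta - alpha) / (P a n - P a 1)).
  assert (Hc0 : 0 < c) by (unfold c; apply Rdiv_lt_0_compat; lra).
  exists (fun i => alpha + c * (P a i - P a 1)).
  assert (HD : forall i, Defs.Delta (fun i => alpha + c * (P a i - P a 1)) i = c * dd a i).
  { intros i; unfold Defs.Delta; simpl; ring. }
  split; [ring|]. split.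
  { unfold c; field; lra. }
  split.
  - intros i _ _. pose proof (HD i) as E; unfold Defs.Delta in E.
    pose proof (dd_pos a i). pose proof (Rmult_lt_0_compat _ _ Hc0 H). lra.
  - intros i Hi1 Hi2. rewrite !HD.
    assert (E : forall k, Defs.Delta a k / (c * dd a k) = sg a k / c).
    { intros k; unfold sg; pose proof (dd_pos a k); field; lra. }
    rewrite !E. unfold Rdiv. apply Rmult_le_compat_r.
    { left; apply Rinv_0_lt_compat; lra. }
    destruct (Nat.lt_ge_cases i m).
    + rewrite (sg_neg a i). apply sg_ge.
      pose proof (Hd i Hi1 H). unfold Defs.Delta; lra.
    + destruct (Nat.lt_ge_cases i M).
      * rewrite (sg_zero a i) by (unfold Defs.Delta; rewrite (Hc i); lia || ring).
        destruct (Nat.lt_ge_cases (S i) M).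
        -- rewrite (sg_zero a (S i)) by (unfold Defs.Delta; rewrite (Hc (S i)); lia || ring). lra.
        -- rewrite (sg_pos a (S i)). lra. pose proof (Hi (S i) H4 Hi2). unfold Defs.Delta; lra.
      * rewrite (sg_pos a i), (sg_pos a (S i)). lra.
        pose proof (Hi (S i) ltac:(lia) Hi2). unfold Defs.Delta; lra.
        pose proof (Hi i H0 ltac:(lia)). unfold Defs.Delta; lra.
Qed.
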